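(* Let $\mathcal{D}$ be a dyadic grid, $f\in L^2(\mathbb{R}^d)$ and $j\in\mathbb{N}_0$. For all $x\in\mathbb{R}^d$, \[ S_j^{\mathcal{D}}f(x)\le S_j^{3\mathcal{D}}f(x)\le 3^{d/2}S_j^{\mathcal{D}}f(x), \] where \[ \big(S_j^{\mathcal{D}}f(x)\big)^2=\sum_{Q\in\mathcal{D}}\sum_{\substack{P\in\mathcal{D},\,P\subset Q\\ \ell P=2^{-j}\ell Q}}\frac{\langle f,h_P\rangle^2}{|P|}\mathbf{1}_P(x),\qquad \big(S_j^{3\mathcal{D}}f(x)\big)^2=\sum_{R\in\mathcal{D}}\sum_{\substack{P\in\mathcal{D},\,P\subset 3R\\ \ell P=2^{-j}\ell R}}\frac{\langle f,h_P\rangle^2}{|P|}\mathbf{1}_P(x). \]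
   Context: A dyadic grid is the standard grid $\bigcup_j\{2^{-j}([0,1)^d+m):m\in\mathbb{Z}^d\}$ or a translate of it by $\omega\in(\{0,1\}^d)^{\mathbb{Z}}$. $3R$ is the cube concentric with $R$ of side $3\ell R$. For a dyadic cube $P=P_1\times\dots\times P_d$, the Haar functions are $h_P^\epsilon=\prod_ih_{P_i}^{\epsilon_i}$, $\epsilon\in\{0,1\}^d\setminus\{0\}^d$, where $h_I^0=|I|^{-1/2}\mathbf{1}_I$, $h_I^1=|I|^{-1/2}(\mathbf{1}_{I^-}-\mathbf{1}_{I^+})$; $\langle f,h_P\rangle^2:=\sum_\epsilon\langle f,h_P^\epsilon\rangle^2$. *)

(* Defs.v *)
From HB Require Import structures.
From mathcomp Require Import all_boot all_order all_algebra.
From mathcomp Require Import all_classical all_reals all_analysis.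
Set Implicit Arguments. Unset Strict Implicit. Unset Printing Implicit Defensive.
Import Order.TTheory GRing.Theory Num.Theory.
Local Open Scope classical_set_scope.
Local Open Scope ring_scope.

Section Dyadic.
Variable R : realType.

(* Iterated one-dimensional Lebesgue integrals; for nonnegative measurable
   functions this is the integral against Lebesgue measure on R^d (Tonelli). *)
Fixpoint iint (n : nat) : (n.-tuple R -> \bar R) -> \bar R :=
  match n return (n.-tuple R -> \bar R) -> \bar R with
  | 0 => fun g => g [tuple]
  | n'.+1 => fun g =>
      (\int[@lebesgue_measure R]_(y in [set: R]) iint (fun t => g (cons_tuple y t)))%E
  end.

Variable d : nat.

Definition Lint (g : d.-tuple R -> R) : \bar R :=
  (iint (EFin \o g)^\+ - iint (EFin \o g)^\-)%E.

Definition inner (f g : d.-tuple R -> R) : \bar R := Lint (fun x => f x * g x).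

Definition L2 (f : d.-tuple R -> R) : Prop :=
  measurable_fun [set: d.-tuple R] f /\
  (iint (fun x => (f x ^+ 2)%:E) < +oo)%E.

Definition dshift := int -> 'I_d -> bool.

Definition side (k : int) : R := (2 : R) ^ (- k).

Definition offset (w : dshift) (k : int) (i : 'I_d) : R :=
  fine (\sum_(n <oo) (side (k + n.+1%:Z) * ((w (k + n.+1%:Z) i : nat)%:R))%:E)%E.

(* a cube of D^w is indexed by its generation k and its integer position m:
   Q = 2^{-k}([0,1)^d + m) + sum_{i>k} 2^{-i} omega_i *)
Definition cidx := (int * d.-tuple int)%type.

Definition corner (w : dshift) (Q : cidx) (i : 'I_d) : R :=
  (tnth Q.2 i)%:~R * side Q.1 + offset w Q.1 i.

Definition cube (w : dshift) (Q : cidx) : set (d.-tuple R) :=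
  [set x | forall i, corner w Q i <= tnth x i < corner w Q i + side Q.1].

Definition cube3 (w : dshift) (Q : cidx) : set (d.-tuple R) :=
  [set x | forall i, corner w Q i - side Q.1 <= tnth x i
                     < corner w Q i + 2 * side Q.1].

Definition vol (Q : cidx) : R := side Q.1 ^+ d.

Definition haar1 (a l : R) (e : bool) (t : R) : R :=
  (Num.sqrt l)^-1 *
  (if e then
     (if (a <= t) && (t < a + l / 2) then 1
      else if (a + l / 2 <= t) && (t < a + l) then -1 else 0)
   else if (a <= t) && (t < a + l) then 1 else 0).

Definition haar (w : dshift) (P : cidx) (e : {ffun 'I_d -> bool})
  (x : d.-tuple R) : R :=
  \prod_(i < d) haar1 (corner w P i) (side P.1) (e i) (tnth x i).

(* <f, h_P>^2 = sum_{eps <> 0} <f, h_P^eps>^2 *)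
Definition coef2 (w : dshift) (f : d.-tuple R -> R) (P : cidx) : \bar R :=
  (\sum_(e : {ffun 'I_d -> bool} | e != [ffun => false])
      (inner f (haar w P e) * inner f (haar w P e)))%E.

Definition term (w : dshift) (f : d.-tuple R -> R) (P : cidx)
  (x : d.-tuple R) : \bar R :=
  (coef2 w f P * ((vol P)^-1)%:E * (\1_(cube w P) x)%:E)%E.

Definition Sj2 (w : dshift) (f : d.-tuple R -> R) (j : nat)
  (x : d.-tuple R) : \bar R :=
  \esum_(Q in [set: cidx])
    \esum_(P in [set P : cidx | cube w P `<=` cube w Q /\
                                side P.1 = 2 ^- j * side Q.1])
       term w f P x.

Definition S3j2 (w : dshift) (f : d.-tuple R -> R) (j : nat)
  (x : d.-tuple R) : \bar R :=
  \esum_(Q in [set: cidx])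
    \esum_(P in [set P : cidx | cube w P `<=` cube3 w Q /\
                                side P.1 = 2 ^- j * side Q.1])
       term w f P x.

Definition Sj w f j x : \bar R := sqrte (Sj2 w f j x).
Definition S3j w f j x : \bar R := sqrte (S3j2 w f j x).

End Dyadic.

(* Main.v *)
Require Import Defs.
From HB Require Import structures.
From mathcomp Require Import all_boot all_order all_algebra.
From mathcomp Require Import all_classical all_reals all_analysis.
From mathcomp Require Import zify lra.
Import Order.TTheory GRing.Theory Num.Theory.
Local Open Scope classical_set_scope.
Local Open Scope ring_scope.

Lemma side_gt0 (R : realType) (k : int) : 0 < side R k.
Proof. by rewrite /side exprz_gt0. Qed.

Lemma sideS (R : realType) (k : int) : side R k = 2 * side R (k + 1).
Proof.
rewrite /side (_ : - k = 1 + - (k + 1)); last by lia.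
by rewrite expfzDr ?expr1z // pnatr_eq0.
Qed.

Lemma side_add (R : realType) (k : int) (j : nat) :
  side R k = 2 ^+ j * side R (k + j%:Z).
Proof.
elim: j => [|j IH]; first by rewrite expr0 mul1r addr0.
rewrite IH (sideS R (k + j%:Z)) exprSr -mulrA.
by congr (_ * (_ * side R _)); lia.
Qed.

Lemma side_inj (R : realType) (a b : int) : side R a = side R b -> a = b.
Proof.
rewrite /side => h.
have : (2 : R) ^ (- a + a) = 2 ^ (- b + a).
  by rewrite !expfzDr ?pnatr_eq0 // h.
rewrite addNr expr0z => /esym/eqP; rewrite pexprz_eq1 ?ler0n //.
have -> : ((2 : R) == 1) = false by apply/negbTE; rewrite pnatr_eq1.
by rewrite orbF => /eqP; lia.
Qed.

Lemma side_cond (R : realType) (a b : int) (j : nat) :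
  side R a = 2 ^- j * side R b -> a = b + j%:Z.
Proof.
move=> h; apply: (@side_inj R); rewrite h (side_add R b j) mulrA mulVf ?mul1r // expf_neq0 // pnatr_eq0.
Qed.
Lemma offsetS (R : realType) d (w : dshift d) (k : int) (i : 'I_d) :
  exists b : bool, offset R w k i = side R (k + 1) * (b : nat)%:R + offset R w (k + 1) i.
Proof.
rewrite /offset.
set a := fun (k : int) (n : nat) => (side R (k + n.+1%:Z) * ((w (k + n.+1%:Z) i : nat)%:R))%:E.
have a0 k' n : (0 <= a k' n)%E.
  by rewrite lee_fin mulr_ge0 ?ler0n // ltW // side_gt0.
rewrite -/(a k) -/(a (k+1)%R).
rewrite nneseries_recl //.
have -> : (\sum_(1 <= n <oo) a k n = \sum_(0 <= n <oo) a (k+1)%R n)%E.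
  have ea n : a (k+1)%R n = a k n.+1.
    by rewrite /a; have -> : k + 1 + n.+1%:Z = k + n.+2%:Z by lia.
  under [in RHS]eq_fun do under eq_bigr do rewrite ea.
  set X := fun N => (\sum_(1 <= n < N) a k n)%E.
  have cX : cvgn X by apply: is_cvg_ereal_nneg_natsum.
  have eX : (fun N => \sum_(0 <= n < N) a k n.+1)%E = (fun N => X N.+1).
    by apply: funext => N; rewrite /X big_add1.
  rewrite eX; apply/esym/cvg_lim => //.
  by rewrite (cvg_shiftS X).
have := nneseries_ge0 (u_ := a (k+1)%R) (P := xpredT) (N := 0%N) (fun n _ _ => a0 _ n).
case: (\sum_(0 <= n <oo) a (k+1)%R n)%E => [r||] //= _.
- by exists (w (k+1) i).
- by exists false; rewrite mulr0 add0r.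
- by move=> n _; exact: a0.
Qed.

Lemma offset_iter (R : realType) d (w : dshift d) (k : int) (i : 'I_d) (j : nat) :
  exists t : int, offset R w k i = side R (k + j%:Z) * t%:~R + offset R w (k + j%:Z) i.
Proof.
elim: j => [|j [t IH]]; first by exists 0; rewrite mulr0 add0r addr0.
have [b hb] := offsetS R _ w (k + j%:Z) i.
exists (2 * t + (b : nat)%:Z).
have e : k + j%:Z + 1 = k + j.+1%:Z by lia.
rewrite IH hb e (sideS R (k + j%:Z)) e.
rewrite intrD intrM /=.
have -> : ((b : nat)%:Z)%:~R = (b : nat)%:R :> R by [].
lra.
Qed.

Lemma core1 (R : realType) (s o : R) (J t m m' : int) : 0 < s -> 0 < J ->
  ((m * J + t)%:~R * s + o) - J%:~R * s <= m'%:~R * s + o ->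
  m'%:~R * s + o < ((m * J + t)%:~R * s + o) + 2 * (J%:~R * s) ->
  exists v : 'I_3,
    ((m + (v : nat)%:Z - 1) * J + t)%:~R * s + o <= m'%:~R * s + o /\
    m'%:~R * s + o + s <= ((m + (v : nat)%:Z - 1) * J + t)%:~R * s + o + J%:~R * s.
Proof.
move=> s0 J0 h1 h2.
have i1 : m * J + t - J <= m'.
  rewrite -(ler_int R) -(ler_pM2r s0) intrB mulrBl; lra.
have i2 : m' < m * J + t + 2 * J.
  rewrite -(ltr_int R) -(ltr_pM2r s0) intrD mulrDl intrM mulrDl /=.
  lra.
set n := m' - t.
set q := (n %/ J)%Z.
have f1 : q * J <= n by apply: lez_floor; lia.
have f2 : n < (q + 1) * J by apply: ltz_ceil.
have qlo : m - 1 <= q.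
  have : (m - 1) * J < (q + 1) * J by lia.
  by rewrite ltr_pM2r // => ?; lia.
have qhi : q <= m + 1.
  have : q * J < (m + 2) * J by lia.
  by rewrite ltr_pM2r // => ?; lia.
have hv : (absz (q - m + 1)%R < 3)%N by lia.
exists (Ordinal hv) => /=.
have -> : m + (absz (q - m + 1))%:Z - 1 = q by lia.
rewrite /n in f1 f2.
split.
  have : (q * J + t <= m') by lia.
  rewrite -(ler_int R) -(ler_pM2r s0); lra.
have : m' + 1 <= (q * J + t) + J by lia.
rewrite -(ler_int R) -(ler_pM2r s0) !intrD !mulrDl /= mul1r; lra.
Qed.

Definition sh {d} (v : {ffun 'I_d -> 'I_3}) (Q : cidx d) : cidx d :=
  (Q.1, [tuple tnth Q.2 i + (v i : nat)%:Z - 1 | i < d]).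

Lemma cover (R : realType) d (w : dshift d) (j : nat) (Rc P : cidx d) :
  cube (R:=R) w P `<=` cube3 (R:=R) w Rc -> P.1 = Rc.1 + j%:Z ->
  exists v : {ffun 'I_d -> 'I_3}, cube (R:=R) w P `<=` cube (R:=R) w (sh v Rc).
Proof.
move=> sub eP.
have xP : cube (R:=R) w P [tuple corner R w P i | i < d].
  move=> i; rewrite tnth_mktuple lexx /= ltrDl; exact: side_gt0.
have hi : forall i : 'I_d, exists v : 'I_3,
   ((tnth Rc.2 i + (v:nat)%:Z - 1)%:~R * side R Rc.1 + offset R w Rc.1 i <= corner R w P i) /\
   (corner R w P i + side R P.1 <= (tnth Rc.2 i + (v:nat)%:Z - 1)%:~R * side R Rc.1 + offset R w Rc.1 i + side R Rc.1).
  move=> i.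
  have [t ht] := offset_iter R _ w Rc.1 i j.
  have sR : side R Rc.1 = (2^+j : int)%:~R * side R P.1.
    by rewrite (side_add R Rc.1 j) -eP rmorphXn.
  have := sub _ xP i; rewrite /cube3 tnth_mktuple => /andP[h1 h2].
  have s0 := side_gt0 R P.1.
  have J0 : (0 < (2 ^+ j : int)) by rewrite exprn_gt0.
  have ec : forall m : int, m%:~R * side R Rc.1 + offset R w Rc.1 i =
     (m * 2 ^+ j + t)%:~R * side R P.1 + offset R w P.1 i.
    by move=> m; rewrite ht sR eP intrD intrM; lra.
  have cP : corner R w P i = (tnth P.2 i)%:~R * side R P.1 + offset R w P.1 i by [].
  rewrite /corner ec sR in h1 h2.
  rewrite cP in h1 h2 *.
  have [v [hv1 hv2]] := @core1 R _ _ _ _ _ _ s0 J0 h1 h2.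
  by exists v; rewrite ec sR.
have [g hg] := choice hi.
exists [ffun i => g i] => y Py i.
have [hy1 hy2] := andP (Py i).
have [g1 g2] := hg i.
rewrite /corner /sh /= tnth_mktuple ffunE.
apply/andP; split; first exact: le_trans g1 hy1.
apply: lt_le_trans g2.
have := hy2; rewrite /corner; lra.
Qed.

Lemma sqe_ge0 (R : realType) (e : \bar R) : (0 <= e * e)%E.
Proof. by case: e => [r||] //=; rewrite lee_fin -expr2 sqr_ge0. Qed.

Lemma term_ge0 (R : realType) d (w : dshift d) f (P : cidx d) (x : d.-tuple R) :
  (0 <= term w f P x)%E.
Proof.
rewrite /term; apply: mule_ge0; first apply: mule_ge0.
- by rewrite /coef2; apply: sume_ge0 => e _; exact: sqe_ge0.
- by rewrite lee_fin invr_ge0 /vol exprn_ge0 // ltW // side_gt0.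
- by rewrite lee_fin /indic ler0n.
Qed.

Lemma esum_sub (R : realType) (T : choiceType) (A B : set T) (a : T -> \bar R) :
  A `<=` B -> (forall i, (0 <= a i)%E) -> (\esum_(i in A) a i <= \esum_(i in B) a i)%E.
Proof.
move=> AB a0; rewrite (esum_mkcond A) (esum_mkcond B); apply: le_esum => i _.
case: ifPn => iA; last by case: ifP.
by rewrite ifT // inE; apply: AB; rewrite inE in iA.
Qed.

Definition ush {d} (v : {ffun 'I_d -> 'I_3}) (Q : cidx d) : cidx d :=
  (Q.1, [tuple tnth Q.2 i - (v i : nat)%:Z + 1 | i < d]).

Lemma sh_bij d (v : {ffun 'I_d -> 'I_3}) : set_bij [set: cidx d] [set: cidx d] (sh v).
Proof.
rewrite setTT_bijective; exists (ush v) => Q; case: Q => k m;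
  rewrite /sh /ush /=; congr pair; apply: eq_from_tnth => i;
  rewrite !tnth_mktuple; lia.
Qed.

Theorem proposition8p2 (R : realType) (d : nat) (w : dshift d)
  (f : d.-tuple R -> R) (j : nat) :
  L2 f ->
  forall x : d.-tuple R,
    (Sj w f j x <= S3j w f j x)%E /\
    (S3j w f j x <= ((3 : R) `^ (d%:R / 2))%:E * Sj w f j x)%E.
Proof.
move=> _ x.
have t0 := fun P => @term_ge0 R d w f P x.
set SS := fun Q : cidx d => [set P : cidx d | cube (R:=R) w P `<=` cube w Q /\
                                side R P.1 = 2 ^- j * side R Q.1].
set S3 := fun Q : cidx d => [set P : cidx d | cube (R:=R) w P `<=` cube3 w Q /\
                                side R P.1 = 2 ^- j * side R Q.1].
set A := fun Q => (\esum_(P in SS Q) term w f P x)%E.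
have S0 : (0 <= Sj2 w f j x)%E by apply: esum_ge0 => Q _; exact: esum_ge0.
have hle : (Sj2 w f j x <= S3j2 w f j x)%E.
  rewrite /Sj2 /S3j2; apply: le_esum => Q _; apply: esum_sub => // P [h1 h2].
  split => // y /h1 Py i; have /andP[a b] := Py i.
  have sg := side_gt0 R Q.1; apply/andP; split; lra.
have step : forall Rc : cidx d, (\esum_(P in S3 Rc) term w f P x <=
     \sum_(v : {ffun 'I_d -> 'I_3}) A (sh v Rc))%E.
  move=> Rc.
  apply: (@le_trans _ _ (\esum_(P in S3 Rc) \sum_(v : {ffun 'I_d -> 'I_3})
       (if P \in SS (sh v Rc) then term w f P x else 0))%E).
    apply: le_esum => P [h1 h2].
    have eP := @side_cond R _ _ _ h2.
    have [v hv] := @cover R d w j _ _ h1 eP.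
    rewrite (bigD1 v) //= ifT; last by rewrite inE; split.
    by rewrite leeDl // sume_ge0 // => v' _; case: ifP.
  rewrite esum_sum; last by move=> P v _ _; case: ifP.
  apply: lee_sum => v _.
  rewrite /A (esum_mkcond (SS _)).
  by apply: esum_sub => // P; case: ifP.
have hge : (S3j2 w f j x <= ((3 ^ d)%:R)%:E * Sj2 w f j x)%E.
  rewrite /S3j2.
  apply: le_trans (le_esum (fun Rc _ => step Rc)) _.
  rewrite esum_sum; last by move=> Rc v _ _; exact: esum_ge0.
  under eq_bigr => v _ do rewrite -(@reindex_esum R _ _ setT setT (sh v) A (@sh_bij d v)).
  rewrite sumr_const card_ffun !card_ord mule_natl.
  by [].
split.
  by rewrite /Sj /S3j lee_sqrt // (le_trans S0 hle).
rewrite /Sj /S3j.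
apply: (@le_trans _ _ (sqrte (((3 ^ d)%:R)%:E * Sj2 w f j x))).
  by rewrite lee_sqrt // mule_ge0.
rewrite sqrteM // /=.
have -> : (3 : R) `^ (d%:R / 2) = Num.sqrt ((3 ^ d)%:R).
  by rewrite powRrM powR_mulrn ?ler0n // powR12_sqrt ?exprn_ge0 ?ler0n // natrX.
by [].
Qed.
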